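(* Let $\{f_t\}_{t\in[0,\varepsilon]}$ be a Misiurewicz-rooted unimodal family on $I=[-1,1]$. There exists $\theta_0>0$ such that for every $\theta\in(0,\theta_0)$ and every sufficiently small $t$ the following holds. Let $U_0,U_1$ be open intervals with $0\in U_1\subset U_0\subset(-\theta,\theta)$, such that for $j=0,1$, $f_t(\partial U_j)$ is a single point preperiodic for $f_t$, $f_t^k(\partial U_j)\notin U_0$ for all $k\ge1$, and $|U_1|\le\theta\,\mathrm{dist}(U_1,\partial U_0)$. Suppose that either $0$ never returns to $U_0$ under $f_t$, or the first return of $0$ to $U_0$ lies in $U_1$. Let $\phi_1$ be the first return map of $f_t$ to $U_1$ and let $W$ be a non-central branch of $\phi_1$, with $\phi_1=f_t^n$ on $W$. Then there is an open interval $\hat W$ with $W\subset\hat W\subset U_1$ mapped diffeomorphically by $f_t^n$ onto $U_0$; if $\phi_1$ has a central branch, $\hat W$ is disjoint from it; and $|D\phi_1|\ge5$ on the non-central branches.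
   Context: The first return time to $U_1$ is $r(x)=\inf\{k\ge1\colon f_t^k(x)\in U_1\}$ and $\phi_1(x)=f_t^{r(x)}(x)$; a branch of $\phi_1$ is a maximal open interval on which $r$ is constant (and finite); a branch containing $0$ is called central. A map $f\colon I\to I$ is S-unimodal with critical point $0$ if it is $C^2$, $0$ is its unique turning point and unique point with $f'=0$, $|f'|^{-1/2}$ is convex on each component of $I\setminus\{0\}$, $f(\partial I)\subset\partial I$ and $|f'|>1$ on $\partial I$; non-degenerate if $f''(0)\ne0$. A Misiurewicz-rooted unimodal family is a family $\{f_t\}_{t\in[0,\varepsilon]}$ of non-degenerate S-unimodal maps of $I$ with critical point $0$, with $f_0$ Misiurewicz (the closure of $\{f_0^n(f_0(0))\}_{n\ge0}$ is compact forward-invariant with $|(f_0^k)'|\ge2$ on it for some $k$), and $(x,t)\mapsto f_t(x)$ of class $C^2$. *)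

(* Defs.v *)
From Stdlib Require Import Reals.
From Coquelicot Require Import Coquelicot.
Open Scope R_scope.

Definition iter (n : nat) (g : R -> R) (x : R) : R := Nat.iter n g x.

Definition d_x (F : R -> R -> R) : R -> R -> R := fun t x => Derive (fun y => F t y) x.
Definition d_t (F : R -> R -> R) : R -> R -> R := fun t x => Derive (fun s => F s x) t.

Definition C1_2d (F : R -> R -> R) : Prop :=
  (forall t x, ex_derive (fun y => F t y) x /\ ex_derive (fun s => F s x) t) /\
  (forall t x, continuity_2d_pt F t x /\ continuity_2d_pt (d_x F) t x
               /\ continuity_2d_pt (d_t F) t x).

Definition C2_2d (F : R -> R -> R) : Prop :=
  C1_2d F /\ C1_2d (d_x F) /\ C1_2d (d_t F).

Definition inI (x : R) : Prop := -1 <= x <= 1.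

Definition convex_on (g : R -> R) (P : R -> Prop) : Prop :=
  forall x y l, P x -> P y -> 0 <= l <= 1 ->
    g (l * x + (1 - l) * y) <= l * g x + (1 - l) * g y.

Definition S_unimodal (f : R -> R) : Prop :=
  (forall x, inI x -> inI (f x)) /\
  (forall x, ex_derive f x /\ ex_derive (Derive f) x) /\
  (forall x, continuous (Derive_n f 2) x) /\
  ((forall x y, -1 <= x -> x < y -> y <= 0 -> f x < f y) /\
   (forall x y, 0 <= x -> x < y -> y <= 1 -> f y < f x)
   \/
   (forall x y, -1 <= x -> x < y -> y <= 0 -> f y < f x) /\
   (forall x y, 0 <= x -> x < y -> y <= 1 -> f x < f y)) /\
  (forall x, inI x -> (Derive f x = 0 <-> x = 0)) /\
  convex_on (fun x => / sqrt (Rabs (Derive f x))) (fun x => -1 <= x < 0) /\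
  convex_on (fun x => / sqrt (Rabs (Derive f x))) (fun x => 0 < x <= 1) /\
  (f (-1) = -1 \/ f (-1) = 1) /\ (f 1 = -1 \/ f 1 = 1) /\
  Rabs (Derive f (-1)) > 1 /\ Rabs (Derive f 1) > 1.

Definition non_degenerate (f : R -> R) : Prop := Derive_n f 2 0 <> 0.

Definition in_postcrit_closure (f : R -> R) (x : R) : Prop :=
  forall e, e > 0 -> exists n : nat, Rabs (iter n f (f 0) - x) < e.

Definition Misiurewicz (f : R -> R) : Prop :=
  exists k : nat, forall x, in_postcrit_closure f x ->
    Rabs (Derive (iter k f) x) >= 2.

Definition MR_family (f : R -> R -> R) (eps : R) : Prop :=
  0 < eps /\
  C2_2d f /\
  (forall t, 0 <= t <= eps -> S_unimodal (f t) /\ non_degenerate (f t)) /\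
  Misiurewicz (f 0).

Definition in_open (a b x : R) : Prop := a < x < b.

Definition preperiodic (g : R -> R) (y : R) : Prop :=
  exists m p : nat, (p >= 1)%nat /\ iter (m + p) g y = iter m g y.

Definition return_time (g : R -> R) (a1 b1 x : R) (n : nat) : Prop :=
  (n >= 1)%nat /\ in_open a1 b1 (iter n g x) /\
  forall j : nat, (1 <= j < n)%nat -> ~ in_open a1 b1 (iter j g x).

Definition is_branch (g : R -> R) (a1 b1 c d : R) (n : nat) : Prop :=
  a1 <= c /\ c < d /\ d <= b1 /\
  (forall x, in_open c d x -> return_time g a1 b1 x n) /\
  (forall c' d', c' <= c -> d <= d' -> a1 <= c' -> d' <= b1 ->
     (forall x, in_open c' d' x -> return_time g a1 b1 x n) ->
     c' = c /\ d' = d).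

Definition central (c d : R) : Prop := c < 0 < d.

(* Main.v *)
Require Import Defs.
From Stdlib Require Import Reals Lra Lia Classical.
From Coquelicot Require Import Coquelicot.
Open Scope R_scope.


Lemma DA (f : R -> R) t l : is_derive f t l -> forall eta, eta > 0 ->
  exists delta, delta > 0 /\ forall s, Rabs (s - t) < delta ->
   Rabs (f s - f t - l * (s - t)) <= eta * Rabs (s - t).
Proof.
  intros Hd eta Heta. apply is_derive_Reals in Hd.
  destruct (Hd eta Heta) as [del Hdel].
  exists del. split. apply cond_pos.
  intros s Hs. destruct (Req_dec s t) as [->|Hne].
  - replace (f t - f t - l * (t - t)) with 0 by ring. rewrite Rminus_diag, Rabs_R0. lra.
  - assert (Hh : s - t <> 0) by lra.
    specialize (Hdel (s - t) Hh Hs).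
    replace (t + (s - t)) with s in Hdel by ring.
    replace (f s - f t - l * (s - t)) with (((f s - f t) / (s - t) - l) * (s - t)) by (field; auto).
    rewrite Rabs_mult. apply Rmult_le_compat_r. apply Rabs_pos. lra.
Qed.

Lemma negdiv X e k : k < 0 -> X * k >= - e * k ^ 2 -> X <= - e * k.
Proof. intros Hk H. apply Rnot_lt_le. intro H1.
  assert ((X + e * k) * k < 0) by nra. nra. Qed.
Lemma posdiv X e k : k > 0 -> X * k >= - e * k ^ 2 -> X >= - e * k.
Proof. intros Hk H. apply Rnot_lt_ge. intro H1.
  assert ((X + e * k) * k < 0) by nra. nra. Qed.

Lemma GL (phi : R -> R) x y : x <= y ->
  (forall t, x <= t <= y -> forall eps, eps > 0 -> exists delta, delta > 0 /\
     forall s, x <= s <= y -> Rabs (s - t) < delta ->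
       (phi s - phi t) * (s - t) >= - eps * (s - t) ^ 2) ->
  phi x <= phi y.
Proof.
  intros Hxy Hloc.
  destruct (Req_dec x y) as [<-|Hne]; [lra|].
  apply Rnot_lt_le; intro Hlt.
  set (eps := (phi x - phi y) / (2 * (y - x))).
  assert (Heps : eps > 0) by (unfold eps; apply Rdiv_lt_0_compat; lra).
  set (E := fun s => x <= s <= y /\ forall r, x <= r <= s -> phi r >= phi x - eps * (r - x)).
  assert (HEx : E x). { split. lra. intros r Hr. replace r with x by lra. lra. }
  assert (Hb : bound E). { exists y. intros s [Hs _]. lra. }
  destruct (completeness E Hb (ex_intro _ x HEx)) as [m [Hub Hlub]].
  assert (Hxm : x <= m) by (apply Hub; auto).
  assert (Hmy : m <= y). { apply Hlub. intros s [Hs _]. lra. }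
  assert (Hbelow : forall r, x <= r < m -> phi r >= phi x - eps * (r - x)).
  { intros r Hr. destruct (classic (exists s, E s /\ r < s)) as [[s [[_ Hs] Hrs]]|Hn].
    - apply Hs. lra.
    - exfalso. assert (m <= r). { apply Hlub. intros s Hs. apply Rnot_lt_le. intro. apply Hn. eauto. } lra. }
  assert (Hm : phi m >= phi x - eps * (m - x)).
  { destruct (Req_dec m x) as [->|Hmx]. lra.
    destruct (Hloc m (conj Hxm Hmy) eps Heps) as [del [Hdel Hd]].
    set (s := Rmax x (m - del / 2)).
    assert (Hs1 : x <= s) by (unfold s; apply Rmax_l).
    assert (Hs2 : s < m) by (unfold s; apply Rmax_lub_lt; lra).
    assert (Hs3 : m - del/2 <= s) by (unfold s; apply Rmax_r).
    assert (Hs4 : s <= y) by lra. assert (Hs5 : Rabs (s - m) < del) by (rewrite Rabs_left; lra).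
    assert (Hq := Hd s (conj Hs1 Hs4) Hs5).
    assert (Hq2 := Hbelow s (conj Hs1 Hs2)).
    assert (phi s - phi m <= - eps * (s - m)) by (apply negdiv; lra). nra. }
  assert (HEm : E m). { split. lra. intros r Hr. destruct (Req_dec r m) as [->|]. auto. apply Hbelow. lra. }
  destruct (Req_dec m y) as [->|Hmy'].
  - destruct HEm as [_ H]. specialize (H y ltac:(lra)). unfold eps in H.
    assert (phi x - (phi x - phi y) / (2 * (y - x)) * (y - x) = (phi x + phi y)/2) by (field; lra). lra.
  - exfalso. destruct (Hloc m (conj Hxm Hmy) eps Heps) as [del [Hdel Hd]].
    set (r0 := Rmin y (m + del / 2)).
    assert (Hr1 : m < r0) by (unfold r0; apply Rmin_glb_lt; lra).
    assert (Hr2 : r0 <= y) by (unfold r0; apply Rmin_l).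
    assert (Hr3 : r0 <= m + del/2) by (unfold r0; apply Rmin_r).
    assert (E r0).
    { split. lra. intros r Hr. destruct (Rle_lt_dec r m).
      - destruct HEm as [_ H]. apply H. lra.
      - assert (Hq := Hd r ltac:(lra) ltac:(rewrite Rabs_right; lra)).
        assert (phi r - phi m >= - eps * (r - m)) by (apply posdiv; lra). nra. }
    assert (r0 <= m) by (apply Hub; auto). lra.
Qed.


Lemma frac01 a b : 0 <= a <= b -> 0 < b -> 0 <= a / b <= 1.
Proof. intros Ha Hb. split. apply Rdiv_le_0_compat; lra.
  unfold Rdiv. replace 1 with (b * / b) by (field; lra).
  apply Rmult_le_compat_r. left. apply Rinv_0_lt_compat; lra. lra. Qed.

Lemma CH (g : R -> R) (D : R -> Prop) t s dt ds :
  convex_on g D -> (forall z, t <= z <= s -> D z) -> t < s ->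
  is_derive g t dt -> is_derive g s ds -> dt <= ds.
Proof.
  intros Hc HD Hts Ht Hs.
  set (S := (g s - g t) / (s - t)).
  assert (HS : g s - g t = S * (s - t)) by (unfold S; field; lra).
  apply is_derive_Reals in Ht. apply is_derive_Reals in Hs.
  assert (H1 : dt <= S).
  { apply Rnot_lt_le; intro H.
    destruct (Ht (dt - S) ltac:(lra)) as [del Hdel].
    set (h := Rmin (del / 2) ((s - t) / 2)).
    assert (Hh1 : 0 < h) by (unfold h; apply Rmin_glb_lt; generalize (cond_pos del); lra).
    assert (Hh2 : h <= del / 2) by apply Rmin_l.
    assert (Hh3 : h <= (s - t) / 2) by apply Rmin_r.
    assert (Hq := Hdel h ltac:(intro; lra) ltac:(rewrite Rabs_right; generalize (cond_pos del); lra)).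
    set (lam := (s - (t + h)) / (s - t)).
    assert (Hl : 0 <= lam <= 1) by (unfold lam; apply frac01; lra).
    assert (Hcv := Hc t s lam (HD t ltac:(lra)) (HD s ltac:(lra)) Hl).
    replace (lam * t + (1 - lam) * s) with (t + h) in Hcv by (unfold lam; field; lra).
    set (q := (g (t + h) - g t) / h) in Hq.
    assert (Hq2 : g (t + h) - g t = q * h) by (unfold q; field; lra).
    assert (Hl2 : 1 - lam = h / (s - t)) by (unfold lam; field; lra).
    assert (g (t + h) - g t <= h * S).
    { replace (h * S) with ((1 - lam) * (g s - g t)) by (rewrite Hl2, HS; field; lra). nra. }
    assert (q <= S) by nra.
    apply Rabs_lt_between in Hq. lra. }
  assert (H2 : S <= ds).
  { apply Rnot_lt_le; intro H.
    destruct (Hs (S - ds) ltac:(lra)) as [del Hdel].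
    set (h := Rmin (del / 2) ((s - t) / 2)).
    assert (Hh1 : 0 < h) by (unfold h; apply Rmin_glb_lt; generalize (cond_pos del); lra).
    assert (Hh2 : h <= del / 2) by apply Rmin_l.
    assert (Hh3 : h <= (s - t) / 2) by apply Rmin_r.
    assert (Hq := Hdel (- h) ltac:(intro; lra) ltac:(rewrite Rabs_left; generalize (cond_pos del); lra)).
    set (lam := h / (s - t)).
    assert (Hl : 0 <= lam <= 1) by (unfold lam; apply frac01; lra).
    assert (Hcv := Hc t s lam (HD t ltac:(lra)) (HD s ltac:(lra)) Hl).
    replace (lam * t + (1 - lam) * s) with (s + - h) in Hcv by (unfold lam; field; lra).
    set (q := (g (s + - h) - g s) / - h) in Hq.
    assert (Hq2 : g (s + - h) - g s = q * (- h)) by (unfold q; field; lra).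
    assert (g (s + - h) - g s <= - h * S).
    { replace (- h * S) with (lam * (g t - g s)) by (unfold lam; rewrite <- (Ropp_minus_distr (g s)), HS; field; lra). nra. }
    assert (q >= S) by nra.
    apply Rabs_lt_between in Hq. lra. }
  lra.
Qed.

Lemma DSI (F : R -> R) p q t l :
  (forall a b, p <= a -> a < b -> b <= q -> F a < F b) -> p < q -> p <= t <= q ->
  is_derive F t l -> 0 <= l.
Proof.
  intros Hinc Hpq Ht Hd. apply is_derive_Reals in Hd.
  apply Rnot_lt_le; intro Hl.
  destruct (Hd (- l) ltac:(lra)) as [del Hdel].
  destruct (Rlt_le_dec t q) as [Htq|Htq].
  - set (h := Rmin (del / 2) (q - t)).
    assert (Hh1 : 0 < h) by (unfold h; apply Rmin_glb_lt; generalize (cond_pos del); lra).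
    assert (Hh2 : h <= del / 2) by apply Rmin_l.
    assert (Hh3 : h <= q - t) by apply Rmin_r.
    assert (Hq := Hdel h ltac:(intro; lra) ltac:(rewrite Rabs_right; generalize (cond_pos del); lra)).
    assert (HF := Hinc t (t + h) ltac:(lra) ltac:(lra) ltac:(lra)).
    assert (0 < (F (t + h) - F t) / h) by (apply Rdiv_lt_0_compat; lra).
    apply Rabs_lt_between in Hq. lra.
  - set (h := Rmin (del / 2) (q - p)).
    assert (Hh1 : 0 < h) by (unfold h; apply Rmin_glb_lt; generalize (cond_pos del); lra).
    assert (Hh2 : h <= del / 2) by apply Rmin_l.
    assert (Hh3 : h <= q - p) by apply Rmin_r.
    assert (Hq := Hdel (- h) ltac:(intro; lra) ltac:(rewrite Rabs_left; generalize (cond_pos del); lra)).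
    assert (HF := Hinc (t + - h) t ltac:(lra) ltac:(lra) ltac:(lra)).
    assert (0 < (F (t + - h) - F t) / - h).
    { replace ((F (t + - h) - F t) / - h) with ((F t - F (t + - h)) / h) by (field; lra).
      apply Rdiv_lt_0_compat; lra. }
    apply Rabs_lt_between in Hq. lra.
Qed.

Lemma INJ (G : R -> R) p q z1 z2 :
  (forall x, ex_derive G x) -> (forall x, p < x < q -> Derive G x <> 0) ->
  p <= z1 -> z1 < z2 -> z2 <= q -> G z1 <> G z2.
Proof.
  intros Hd Hnz H1 H2 H3 Heq.
  destruct (MVT_cor2 G (Derive G) z1 z2 H2) as [c [Hc1 Hc2]].
  { intros c _. apply is_derive_Reals. apply Derive_correct. apply Hd. }
  assert (Derive G c * (z2 - z1) = 0) by lra.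
  apply Rmult_integral in H. destruct H. apply (Hnz c); auto; lra. lra.
Qed.

Lemma cont_glob (G : R -> R) : (forall x, ex_derive G x) -> continuity G.
Proof. intros Hd x. apply continuity_pt_filterlim. exact (@ex_derive_continuous R_AbsRing R_NormedModule G x (Hd x)). Qed.

Lemma cont_open (G : R -> R) x a b : continuity_pt G x -> a < G x < b ->
  exists del, del > 0 /\ forall y, Rabs (y - x) < del -> a < G y < b.
Proof.
  intros Hc Hx.
  destruct (Hc (Rmin (G x - a) (b - G x))) as [del [Hdel H]].
  { apply Rmin_glb_lt; lra. }
  exists del. split. lra. intros y Hy.
  destruct (Req_dec y x) as [->|Hne]. lra.
  assert (Hd := H y (conj (conj I (not_eq_sym Hne)) Hy)).
  simpl in Hd. unfold R_dist in Hd. apply Rabs_lt_between in Hd.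
  assert (Rmin (G x - a) (b - G x) <= G x - a) by apply Rmin_l.
  assert (Rmin (G x - a) (b - G x) <= b - G x) by apply Rmin_r. lra.
Qed.

Lemma cont_lt (G : R -> R) x b : continuity_pt G x -> G x < b ->
  exists del, del > 0 /\ forall y, Rabs (y - x) < del -> G y < b.
Proof.
  intros Hc Hx. destruct (cont_open G x (G x - 1) b Hc ltac:(lra)) as [d [Hd H]].
  exists d. split; auto. intros y Hy. apply H; auto.
Qed.

Lemma cont_gt (G : R -> R) x a : continuity_pt G x -> a < G x ->
  exists del, del > 0 /\ forall y, Rabs (y - x) < del -> a < G y.
Proof.
  intros Hc Hx. destruct (cont_open G x a (G x + 1) Hc ltac:(lra)) as [d [Hd H]].
  exists d. split; auto. intros y Hy. apply H; auto.
Qed.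


Definition Pn (F : R -> R) n y := forall i, (i < n)%nat -> inI (iter i F y) /\ iter i F y <> 0.
Definition uF (F : R -> R) x := / sqrt (Rabs (Derive F x)).
Definition vn (F : R -> R) n x := / sqrt (Rabs (Derive (iter n F) x)).

Lemma iter_Sr n F x : iter (S n) F x = iter n F (F x).
Proof. unfold iter. induction n; simpl; auto. simpl in IHn. rewrite IHn; auto. Qed.

Lemma iter_add m n F x : iter (m + n) F x = iter m F (iter n F x).
Proof. unfold iter. induction m; simpl; auto. rewrite IHm; auto. Qed.

Lemma iter_I F : (forall x, inI x -> inI (F x)) -> forall n x, inI x -> inI (iter n F x).
Proof. intros H n. induction n; intros x Hx; simpl. auto. apply H. apply IHn. auto. Qed.

Lemma SU_deriv F : S_unimodal F -> forall x, ex_derive F x.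
Proof. intros [_ [H _]] x. apply H. Qed.

Lemma iter_ex F : (forall x, ex_derive F x) -> forall n x, ex_derive (iter n F) x.
Proof.
  intros H n. induction n; intros x.
  - unfold iter; simpl. apply ex_derive_id.
  - change (ex_derive (fun y => F (iter n F y)) x). apply ex_derive_comp; auto.
Qed.

Lemma is_derive_val (f : R -> R) x l l' : is_derive f x l -> l = l' -> is_derive f x l'.
Proof. intros H <-. auto. Qed.

Lemma is_derive_compR (f g : R -> R) x df dg :
  is_derive f (g x) df -> is_derive g x dg -> is_derive (fun y => f (g y)) x (df * dg).
Proof.
  intros H1 H2. apply is_derive_val with (scal dg df).
  exact (@is_derive_comp R_AbsRing R_NormedModule f g x df dg H1 H2).
  unfold scal; simpl; unfold mult; simpl. ring.
Qed.

Lemma is_derive_multR (f g : R -> R) x df dg :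
  is_derive f x df -> is_derive g x dg -> is_derive (fun y => f y * g y) x (df * g x + f x * dg).
Proof.
  intros H1 H2. apply (is_derive_mult f g x df dg H1 H2). intros; unfold mult; simpl; ring.
Qed.

Lemma iter_is_D F : (forall x, ex_derive F x) -> forall n y,
  is_derive (iter (S n) F) y (Derive (iter n F) (F y) * Derive F y).
Proof.
  intros H n y.
  apply is_derive_ext with (f := fun z => iter n F (F z)).
  { intros z. symmetry. apply iter_Sr. }
  apply is_derive_compR; apply Derive_correct; auto. apply iter_ex; auto.
Qed.

Lemma iter_D F : (forall x, ex_derive F x) -> forall n y,
  Derive (iter (S n) F) y = Derive (iter n F) (F y) * Derive F y.
Proof. intros H n y. apply is_derive_unique. apply iter_is_D; auto. Qed.

Lemma Pn_S F n y : Pn F (S n) y -> Pn F n (F y) /\ inI y /\ y <> 0.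
Proof.
  intros H. split; [|apply (H 0%nat); lia].
  intros i Hi. rewrite <- iter_Sr. apply H. lia.
Qed.

Lemma SU_crit F y : S_unimodal F -> inI y -> y <> 0 -> Derive F y <> 0.
Proof. intros [_ [_ [_ [_ [H _]]]]] Hy Hn Heq. apply Hn. apply H; auto. Qed.

Lemma DNZ F : S_unimodal F -> forall n y, Pn F n y -> Derive (iter n F) y <> 0.
Proof.
  intros HS n. induction n; intros y Hy.
  - unfold iter; simpl. change (Derive id y <> 0). rewrite Derive_id. lra.
  - rewrite iter_D by (apply SU_deriv; auto).
    destruct (Pn_S F n y Hy) as [H1 [H2 H3]].
    apply Rmult_integral_contrapositive. split. apply IHn; auto. apply SU_crit; auto.
Qed.

Lemma invsqrt_mult a b : / sqrt (Rabs (a * b)) = / sqrt (Rabs a) * / sqrt (Rabs b).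
Proof. rewrite Rabs_mult, sqrt_mult_alt by apply Rabs_pos. apply Rinv_mult. Qed.

Lemma vn_S F n y : S_unimodal F -> vn F (S n) y = vn F n (F y) * uF F y.
Proof. intros HS. unfold vn, uF. rewrite iter_D by (apply SU_deriv; auto). apply invsqrt_mult. Qed.

Lemma invsqrt_pos a : a <> 0 -> 0 < / sqrt (Rabs a).
Proof. intros H. apply Rinv_0_lt_compat. apply sqrt_lt_R0. apply Rabs_pos_lt. auto. Qed.

Lemma UD F y : S_unimodal F -> inI y -> y <> 0 -> ex_derive (uF F) y.
Proof.
  intros HS Hy Hn. assert (Hnz := SU_crit F y HS Hy Hn).
  destruct HS as [_ [HD _]]. destruct (HD y) as [_ H2].
  apply Derive_correct in H2.
  eexists. unfold uF.
  apply (is_derive_inv (fun x => sqrt (Rabs (Derive F x)))).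
  apply (is_derive_sqrt (fun x => Rabs (Derive F x))).
  apply (is_derive_Rabs (Derive F)). exact H2. auto.
  apply Rabs_pos_lt; auto.
  apply Rgt_not_eq. apply sqrt_lt_R0. apply Rabs_pos_lt; auto.
Qed.

Lemma uF_sq F y : Derive F y <> 0 -> Derive F y * (uF F y) ^ 2 = Derive F y / Rabs (Derive F y).
Proof.
  intros H. unfold uF. assert (0 < Rabs (Derive F y)) by (apply Rabs_pos_lt; auto).
  set (a := Rabs (Derive F y)) in *.
  assert (Hs : sqrt a * sqrt a = a) by (apply sqrt_sqrt; lra).
  assert (0 < sqrt a) by (apply sqrt_lt_R0; auto).
  replace ((/ sqrt a) ^ 2) with (/ (sqrt a * sqrt a)) by (field; lra).
  rewrite Hs. reflexivity.
Qed.


Lemma is_derive_oppR (f : R -> R) x l : is_derive f x l -> is_derive (fun y => - f y) x (- l).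
Proof. intros H. exact (@is_derive_opp R_AbsRing R_NormedModule f x l H). Qed.

Lemma seg_side y1 y2 : y1 <= y2 -> (forall y, y1 <= y <= y2 -> inI y /\ y <> 0) ->
  (-1 <= y1 /\ y2 < 0) \/ (0 < y1 /\ y2 <= 1).
Proof.
  intros H12 H. destruct (H y1 ltac:(lra)) as [[Ha Hb] Hc]. destruct (H y2 ltac:(lra)) as [[Hd He] Hf].
  destruct (Rlt_le_dec y1 0); destruct (Rlt_le_dec y2 0).
  - left; lra.
  - exfalso. destruct (H 0 ltac:(lra)) as [_ X]. auto.
  - lra.
  - right. split; [|lra]. destruct (Req_dec y1 0); [contradiction|lra].
Qed.

Lemma ratio_pos d : d > 0 -> d / Rabs d = 1.
Proof. intros H. rewrite Rabs_right by lra. field. lra. Qed.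
Lemma ratio_neg d : d < 0 -> d / Rabs d = -1.
Proof. intros H. rewrite Rabs_left by lra. field. lra. Qed.

Lemma SIDE F y1 y2 : S_unimodal F -> y1 <= y2 -> (forall y, y1 <= y <= y2 -> inI y /\ y <> 0) ->
  exists sg, (sg = 1 \/ sg = -1) /\
    (forall y, y1 <= y <= y2 -> Derive F y * (uF F y) ^ 2 = sg) /\
    (forall a b, y1 <= a -> a < b -> b <= y2 -> sg * F a < sg * F b) /\
    (exists D, convex_on (uF F) D /\ forall y, y1 <= y <= y2 -> D y).
Proof.
  intros HS H12 Hseg.
  assert (Hcr : forall y, y1 <= y <= y2 -> Derive F y <> 0).
  { intros y Hy. destruct (Hseg y Hy). apply SU_crit; auto. }
  assert (Hdc : forall y, is_derive F y (Derive F y)) by (intros; apply Derive_correct; apply SU_deriv; auto).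
  pose proof HS as HS'.
  destruct HS' as [HI [HD [HC2 [Hmono [Hcrit [HcvL [HcvR _]]]]]]].
  destruct (seg_side y1 y2 H12 Hseg) as [[L1 L2]|[R1 R2]].
  - destruct Hmono as [[Hinc Hdec]|[Hdec Hinc]].
    + exists 1. split. auto. split.
      { intros y Hy. rewrite uF_sq by auto. apply ratio_pos.
        assert (0 <= Derive F y) by (apply (DSI F (-1) 0 y); auto; lra).
        specialize (Hcr y Hy). lra. }
      split. { intros a b Ha Hab Hb. rewrite !Rmult_1_l. apply Hinc; lra. }
      exists (fun x => -1 <= x < 0). split. exact HcvL. intros; lra.
    + exists (-1). split. auto. split.
      { intros y Hy. rewrite uF_sq by auto. apply ratio_neg.
        assert (0 <= - Derive F y).
        { apply (DSI (fun x => - F x) (-1) 0 y); auto; try lra.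
          intros a b Ha Hab Hb. specialize (Hdec a b Ha Hab Hb). lra.
          apply is_derive_oppR; auto. }
        specialize (Hcr y Hy). lra. }
      split. { intros a b Ha Hab Hb. specialize (Hdec a b ltac:(lra) Hab ltac:(lra)). lra. }
      exists (fun x => -1 <= x < 0). split. exact HcvL. intros; lra.
  - destruct Hmono as [[Hinc Hdec]|[Hdec Hinc]].
    + exists (-1). split. auto. split.
      { intros y Hy. rewrite uF_sq by auto. apply ratio_neg.
        assert (0 <= - Derive F y).
        { apply (DSI (fun x => - F x) 0 1 y); auto; try lra.
          intros a b Ha Hab Hb. specialize (Hdec a b Ha Hab Hb). lra.
          apply is_derive_oppR; auto. }
        specialize (Hcr y Hy). lra. }
      split. { intros a b Ha Hab Hb. specialize (Hdec a b ltac:(lra) Hab ltac:(lra)). lra. }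
      exists (fun x => 0 < x <= 1). split. exact HcvR. intros; lra.
    + exists 1. split. auto. split.
      { intros y Hy. rewrite uF_sq by auto. apply ratio_pos.
        assert (0 <= Derive F y) by (apply (DSI F 0 1 y); auto; lra).
        specialize (Hcr y Hy). lra. }
      split. { intros a b Ha Hab Hb. rewrite !Rmult_1_l. apply Hinc; lra. }
      exists (fun x => 0 < x <= 1). split. exact HcvR. intros; lra.
Qed.

Lemma IVT_seg (G : R -> R) a b z : continuity G -> a <= b ->
  Rmin (G a) (G b) <= z <= Rmax (G a) (G b) -> exists x, a <= x <= b /\ G x = z.
Proof.
  intros Hc Hab Hz. destruct (IVT_gen G a b z Hc Hz) as [x [Hx1 Hx2]].
  rewrite Rmin_left, Rmax_right in Hx1 by lra. eauto.
Qed.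

Lemma mono_prod (X : R -> R) y1 y2 s t :
  (forall a b, y1 <= a -> a <= b -> b <= y2 -> X a <= X b) ->
  y1 <= s <= y2 -> y1 <= t <= y2 -> (X s - X t) * (s - t) >= 0.
Proof.
  intros H Hs Ht. destruct (Rle_dec s t).
  - assert (X s <= X t) by (apply H; lra). nra.
  - assert (X t <= X s) by (apply H; lra). nra.
Qed.

Lemma Rabs_ge_neg x M : Rabs x <= M -> x >= - M.
Proof. intros H. apply Rabs_le_between in H. lra. Qed.


Lemma CONV F : S_unimodal F -> forall n, exists dv : R -> R,
  (forall y, Pn F n y -> is_derive (vn F n) y (dv y)) /\
  (forall y1 y2, y1 <= y2 -> (forall y, y1 <= y <= y2 -> Pn F n y) -> dv y1 <= dv y2).
Proof.
  intros HS n. induction n.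
  - exists (fun _ => 0). split.
    + intros y _. apply is_derive_ext with (f := fun _ => 1).
      { intros z. unfold vn, iter; simpl.
        assert (Derive (fun x => x) z = 1) by apply Derive_id. rewrite H.
        rewrite Rabs_R1, sqrt_1. field. }
      exact (@is_derive_const R_AbsRing R_NormedModule 1 y).
    + intros; lra.
  - destruct IHn as [dv [Hd Hm]].
    set (u := uF F). set (B := fun x => Derive u x).
    set (A := fun x => dv (F x) * (Derive F x * u x ^ 2)).
    set (Pf := fun x => / u x). set (w := fun x => vn F n (F x)).
    assert (Hupos : forall y, inI y -> y <> 0 -> 0 < u y).
    { intros y H1 H2. apply invsqrt_pos. apply SU_crit; auto. }
    assert (Hcont : continuity F) by (apply cont_glob; apply SU_deriv; auto).
    exists (fun x => A x * Pf x + w x * B x). split.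
    + intros y Hy. destruct (Pn_S F n y Hy) as [HPn [HIy Hy0]].
      apply is_derive_ext with (f := fun z => vn F n (F z) * u z).
      { intros; symmetry; apply vn_S; auto. }
      eapply is_derive_val. apply is_derive_multR. apply is_derive_compR. apply Hd; auto.
      apply Derive_correct; apply SU_deriv; auto. apply Derive_correct; apply UD; auto.
      specialize (Hupos y HIy Hy0).
      unfold A, Pf, w, B. cbv beta.
      change (dv (F y) * Derive F y * u y + vn F n (F y) * Derive u y =
        dv (F y) * (Derive F y * u y ^ 2) * / u y + vn F n (F y) * Derive u y).
      field. lra.
    + intros y1 y2 H12 HP.
      assert (Hseg : forall y, y1 <= y <= y2 -> inI y /\ y <> 0).
      { intros y Hy. destruct (Pn_S F n y (HP y Hy)) as [_ X]. auto. }
      destruct (SIDE F y1 y2 HS H12 Hseg) as [sg [Hsg [Hsg1 [Hsg2 [Dc [Hcv HDc]]]]]].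
      change (uF F) with u in Hsg1, Hcv.
      assert (HAm : forall a b, y1 <= a -> a <= b -> b <= y2 -> A a <= A b).
      { intros a b Ha Hab Hb. destruct (Req_dec a b) as [<-|Hne]. lra.
        unfold A. rewrite (Hsg1 a ltac:(lra)), (Hsg1 b ltac:(lra)).
        assert (Hmn : forall p q, a <= p -> p <= q -> q <= b -> F p <= F q ->
                   dv (F p) <= dv (F q)).
        { intros p q Hp Hpq Hq Hf. apply Hm; auto. intros z Hz.
          destruct (IVT_seg F p q z Hcont Hpq) as [x [Hx1 Hx2]].
          { rewrite Rmin_left, Rmax_right; lra. }
          rewrite <- Hx2. destruct (Pn_S F n x (HP x ltac:(lra))). auto. }
        specialize (Hsg2 a b Ha ltac:(lra) Hb).
        destruct Hsg as [-> | ->].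
        - assert (dv (F a) <= dv (F b)) by (apply Hmn; lra). lra.
        - assert (dv (F b) <= dv (F a)).
          { apply Hm. lra. intros z Hz.
            destruct (IVT_seg F a b z Hcont ltac:(lra)) as [x [Hx1 Hx2]].
            { rewrite Rmin_right, Rmax_left; lra. }
            rewrite <- Hx2. destruct (Pn_S F n x (HP x ltac:(lra))). auto. }
          lra. }
      assert (HBm : forall a b, y1 <= a -> a <= b -> b <= y2 -> B a <= B b).
      { intros a b Ha Hab Hb. destruct (Req_dec a b) as [<-|Hne]. lra.
        apply (CH u Dc a b). exact Hcv. intros; apply HDc; lra. lra.
        apply Derive_correct; apply UD; auto; apply Hseg; lra.
        apply Derive_correct; apply UD; auto; apply Hseg; lra. }
      apply (GL (fun x => A x * Pf x + w x * B x) y1 y2 H12).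
      intros t Ht eps Heps.
      destruct (Hseg t Ht) as [HIt Ht0].
      destruct (Pn_S F n t (HP t Ht)) as [HPnt _].
      assert (Hut := Hupos t HIt Ht0).
      assert (HdPf : is_derive Pf t (- B t / u t ^ 2)).
      { apply (is_derive_inv u). apply Derive_correct; apply UD; auto. lra. }
      assert (Hdw : is_derive w t (dv (F t) * Derive F t)).
      { unfold w. apply (is_derive_compR (vn F n) F t). apply Hd; auto. apply Derive_correct; apply SU_deriv; auto. }
      set (eta := eps / (Rabs (A t) + Rabs (B t) + 1)).
      assert (Heta : eta > 0).
      { unfold eta. apply Rdiv_lt_0_compat. lra. generalize (Rabs_pos (A t)) (Rabs_pos (B t)); lra. }
      assert (Heta2 : (Rabs (A t) + Rabs (B t)) * eta <= eps).
      { unfold eta. generalize (Rabs_pos (A t)) (Rabs_pos (B t)); intros.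
        apply (Rmult_le_reg_r (Rabs (A t) + Rabs (B t) + 1)). lra.
        field_simplify; [|lra]. nra. }
      destruct (DA Pf t _ HdPf eta Heta) as [d1 [Hd1 H1]].
      destruct (DA w t _ Hdw eta Heta) as [d2 [Hd2 H2]].
      exists (Rmin d1 d2). split. apply Rmin_glb_lt; lra.
      intros s Hs Hst.
      assert (Hst1 : Rabs (s - t) < d1) by (eapply Rlt_le_trans; [apply Hst|apply Rmin_l]).
      assert (Hst2 : Rabs (s - t) < d2) by (eapply Rlt_le_trans; [apply Hst|apply Rmin_r]).
      specialize (H1 s Hst1). specialize (H2 s Hst2).
      set (q1 := Pf s - Pf t - - B t / u t ^ 2 * (s - t)) in H1.
      set (q2 := w s - w t - dv (F t) * Derive F t * (s - t)) in H2.
      assert (Hkey : A t * (- B t / u t ^ 2) + B t * (dv (F t) * Derive F t) = 0).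
      { unfold A. field. lra. }
      destruct (Hseg s Hs) as [HIs Hs0].
      assert (HPfs : Pf s > 0). { unfold Pf. apply Rinv_0_lt_compat. apply Hupos; auto. }
      assert (Hws : w s > 0).
      { unfold w, vn. apply invsqrt_pos. apply DNZ; auto. destruct (Pn_S F n s (HP s Hs)). auto. }
      assert (HA := mono_prod A y1 y2 s t HAm Hs Ht).
      assert (HB := mono_prod B y1 y2 s t HBm Hs Ht).
      assert (Hrem : Rabs ((A t * q1 + B t * q2) * (s - t)) <= (Rabs (A t) + Rabs (B t)) * eta * (s - t) ^ 2).
      { rewrite Rabs_mult.
        assert (Rabs (A t * q1 + B t * q2) <= (Rabs (A t) + Rabs (B t)) * eta * Rabs (s - t)).
        { eapply Rle_trans. apply Rabs_triang. rewrite !Rabs_mult.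
          generalize (Rabs_pos (A t)) (Rabs_pos (B t)); intros.
          assert (Rabs (A t) * Rabs q1 <= Rabs (A t) * (eta * Rabs (s - t))) by (apply Rmult_le_compat_l; auto).
          assert (Rabs (B t) * Rabs q2 <= Rabs (B t) * (eta * Rabs (s - t))) by (apply Rmult_le_compat_l; auto).
          nra. }
        replace ((s - t) ^ 2) with (Rabs (s - t) * Rabs (s - t)).
        2:{ rewrite <- Rabs_mult. rewrite Rabs_right. ring. assert (0 <= (s-t)*(s-t)) by apply Rle_0_sqr. lra. }
        generalize (Rabs_pos (s - t)). nra. }
      apply Rabs_ge_neg in Hrem.
      assert (Hid : (A s * Pf s + w s * B s - (A t * Pf t + w t * B t)) * (s - t) =
         Pf s * ((A s - A t) * (s - t)) + w s * ((B s - B t) * (s - t))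
         + (A t * q1 + B t * q2) * (s - t)
         + (A t * (- B t / u t ^ 2) + B t * (dv (F t) * Derive F t)) * (s - t) ^ 2).
      { unfold q1, q2. field. lra. }
      rewrite Hid, Hkey.
      assert (Pf s * ((A s - A t) * (s - t)) >= 0) by nra.
      assert (w s * ((B s - B t) * (s - t)) >= 0) by nra.
      assert (0 <= (s - t) ^ 2) by (rewrite <- Rsqr_pow2; apply Rle_0_sqr).
      assert (eps * (s - t) ^ 2 >= (Rabs (A t) + Rabs (B t)) * eta * (s - t) ^ 2).
      { apply Rle_ge. apply Rmult_le_compat_r; auto. }
      lra.
Qed.


Lemma left_end (G : R -> R) (al be lo cc w0 : R) : continuity G -> lo <= cc -> cc < w0 ->
  (forall z, cc < z <= w0 -> al < G z < be) -> ~ (al < G lo < be) ->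
  exists e, lo <= e <= cc /\ (forall z, e < z <= w0 -> al < G z < be) /\ (G e = al \/ G e = be).
Proof.
  intros Hc Hlo Hcw Hin Hlo2.
  set (E := fun y => y <= w0 /\ forall z, y <= z <= w0 -> al < G z < be).
  set (E' := fun x => E (- x)).
  assert (HElo : forall y, E y -> lo < y).
  { intros y [Hy1 Hy2]. apply Rnot_le_lt. intro H. apply Hlo2. apply Hy2. lra. }
  assert (Hb : bound E'). { exists (- lo). intros x Hx. apply HElo in Hx. lra. }
  assert (HEw : E w0). { split. lra. intros z Hz. apply Hin. lra. }
  assert (HE'w : E' (- w0)). { unfold E'. rewrite Ropp_involutive. auto. }
  destruct (completeness E' Hb (ex_intro _ _ HE'w)) as [m [Hub Hlub]].
  set (e := - m).
  assert (Hi : forall y, E y -> e <= y).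
  { intros y Hy. assert (- y <= m). { apply Hub. unfold E'. rewrite Ropp_involutive. auto. } unfold e; lra. }
  assert (Hii : lo <= e).
  { assert (m <= - lo). { apply Hlub. intros x Hx. apply HElo in Hx. lra. } unfold e; lra. }
  assert (Hew : e <= w0) by (apply Hi; auto).
  assert (Hiii : e <= cc).
  { apply Rnot_lt_le. intro H. assert (E ((cc + e) / 2)).
    { split. lra. intros z Hz. apply Hin. lra. }
    apply Hi in H0. lra. }
  assert (Hiv : forall z, e < z <= w0 -> al < G z < be).
  { intros z Hz. destruct (classic (exists y, E y /\ y < z)) as [[y [[Hy1 Hy2] Hyz]]|Hn].
    - apply Hy2. lra.
    - exfalso. assert (m <= - z).
      { apply Hlub. intros x Hx. apply Rnot_lt_le. intro. apply Hn. exists (- x). split. auto. lra. }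
      unfold e in Hz. lra. }
  exists e. split. lra. split. auto.
  assert (Hv : ~ (al < G e < be)).
  { intro H. destruct (cont_open G e al be (Hc e) H) as [del [Hdel Hd]].
    assert (E (e - del / 2)).
    { split. lra. intros z Hz. destruct (Rle_lt_dec z e).
      - apply Hd. rewrite Rabs_left1; lra.
      - apply Hiv. lra. }
    apply Hi in H0. lra. }
  assert (Hvi : al <= G e).
  { apply Rnot_lt_le. intro H. destruct (cont_lt G e al (Hc e) H) as [del [Hdel Hd]].
    set (z := Rmin (e + del / 2) w0).
    assert (e < z) by (unfold z; apply Rmin_glb_lt; lra).
    assert (z <= e + del / 2) by (unfold z; apply Rmin_l).
    assert (z <= w0) by (unfold z; apply Rmin_r).
    assert (G z < al) by (apply Hd; rewrite Rabs_right; lra).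
    assert (al < G z < be) by (apply Hiv; lra). lra. }
  assert (Hvii : G e <= be).
  { apply Rnot_lt_le. intro H. destruct (cont_gt G e be (Hc e) H) as [del [Hdel Hd]].
    set (z := Rmin (e + del / 2) w0).
    assert (e < z) by (unfold z; apply Rmin_glb_lt; lra).
    assert (z <= e + del / 2) by (unfold z; apply Rmin_l).
    assert (z <= w0) by (unfold z; apply Rmin_r).
    assert (be < G z) by (apply Hd; rewrite Rabs_right; lra).
    assert (al < G z < be) by (apply Hiv; lra). lra. }
  destruct (Req_dec (G e) al). auto. destruct (Req_dec (G e) be). auto.
  exfalso. apply Hv. lra.
Qed.

Lemma cont_refl (G : R -> R) : continuity G -> continuity (fun x => G (- x)).
Proof.
  intros Hc. exact (continuity_comp (fun x => - x) G (continuity_opp id (derivable_continuous id derivable_id)) Hc).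
Qed.

Lemma right_end (G : R -> R) (al be hi dd w0 : R) : continuity G -> dd <= hi -> w0 < dd ->
  (forall z, w0 <= z < dd -> al < G z < be) -> ~ (al < G hi < be) ->
  exists e, dd <= e <= hi /\ (forall z, w0 <= z < e -> al < G z < be) /\ (G e = al \/ G e = be).
Proof.
  intros Hc H1 H2 Hin Hhi.
  destruct (left_end (fun x => G (- x)) al be (- hi) (- dd) (- w0) (cont_refl G Hc)) as [e [He1 [He2 He3]]].
  lra. lra. intros z Hz. apply Hin. lra. rewrite Ropp_involutive. auto.
  exists (- e). split. lra. split.
  intros z Hz. replace z with (- - z) by ring. apply He2. lra. auto.
Qed.

Lemma clos_left (G : R -> R) c d al be : continuity_pt G d -> c < d ->
  (forall x, c < x < d -> al < G x < be) -> al <= G d <= be.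
Proof.
  intros Hc Hcd Hin. split.
  - apply Rnot_lt_le. intro H. destruct (cont_lt G d al Hc H) as [del [Hdel Hd]].
    set (x := Rmax (d - del / 2) ((c + d) / 2)).
    assert (d - del/2 <= x) by apply Rmax_l. assert ((c+d)/2 <= x) by apply Rmax_r.
    assert (x < d) by (apply Rmax_lub_lt; lra).
    assert (G x < al) by (apply Hd; rewrite Rabs_left; lra).
    assert (al < G x < be) by (apply Hin; lra). lra.
  - apply Rnot_lt_le. intro H. destruct (cont_gt G d be Hc H) as [del [Hdel Hd]].
    set (x := Rmax (d - del / 2) ((c + d) / 2)).
    assert (d - del/2 <= x) by apply Rmax_l. assert ((c+d)/2 <= x) by apply Rmax_r.
    assert (x < d) by (apply Rmax_lub_lt; lra).
    assert (be < G x) by (apply Hd; rewrite Rabs_left; lra).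
    assert (al < G x < be) by (apply Hin; lra). lra.
Qed.

Lemma clos_right (G : R -> R) c d al be : continuity_pt G c -> c < d ->
  (forall x, c < x < d -> al < G x < be) -> al <= G c <= be.
Proof.
  intros Hc Hcd Hin. split.
  - apply Rnot_lt_le. intro H. destruct (cont_lt G c al Hc H) as [del [Hdel Hd]].
    set (x := Rmin (c + del / 2) ((c + d) / 2)).
    assert (x <= c + del/2) by apply Rmin_l. assert (x <= (c+d)/2) by apply Rmin_r.
    assert (c < x) by (apply Rmin_glb_lt; lra).
    assert (G x < al) by (apply Hd; rewrite Rabs_right; lra).
    assert (al < G x < be) by (apply Hin; lra). lra.
  - apply Rnot_lt_le. intro H. destruct (cont_gt G c be Hc H) as [del [Hdel Hd]].
    set (x := Rmin (c + del / 2) ((c + d) / 2)).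
    assert (x <= c + del/2) by apply Rmin_l. assert (x <= (c+d)/2) by apply Rmin_r.
    assert (c < x) by (apply Rmin_glb_lt; lra).
    assert (be < G x) by (apply Hd; rewrite Rabs_right; lra).
    assert (al < G x < be) by (apply Hin; lra). lra.
Qed.

Lemma BETW (G : R -> R) p q al be : (forall x, ex_derive G x) ->
  (forall x, p < x < q -> Derive G x <> 0) -> p <= q ->
  al < G p < be -> al < G q < be -> forall x, p <= x <= q -> al < G x < be.
Proof.
  intros Hd Hnz Hpq Hp Hq x Hx.
  assert (Hc : continuity G) by (apply cont_glob; auto).
  destruct (Rle_lt_dec (G x) al) as [Hlo|Hlo].
  - exfalso.
    assert (x <> p) by (intro; subst; lra). assert (x <> q) by (intro; subst; lra).
    set (m := (al + Rmin (G p) (G q)) / 2).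
    assert (Rmin (G p) (G q) <= G p) by apply Rmin_l. assert (Rmin (G p) (G q) <= G q) by apply Rmin_r.
    assert (al < Rmin (G p) (G q)) by (apply Rmin_glb_lt; lra).
    destruct (IVT_seg G p x m Hc ltac:(lra)) as [z1 [Hz1 Hz1']].
    { rewrite Rmin_right, Rmax_left; unfold m; lra. }
    destruct (IVT_seg G x q m Hc ltac:(lra)) as [z2 [Hz2 Hz2']].
    { rewrite Rmin_left, Rmax_right; unfold m; lra. }
    assert (z1 <> x) by (intro; subst; unfold m in *; lra).
    assert (z2 <> x) by (intro; subst; unfold m in *; lra).
    apply (INJ G p q z1 z2 Hd Hnz); lra.
  - split; auto. apply Rnot_le_lt. intro Hhi. 
    assert (x <> p) by (intro; subst; lra). assert (x <> q) by (intro; subst; lra).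
    set (m := (be + Rmax (G p) (G q)) / 2).
    assert (G p <= Rmax (G p) (G q)) by apply Rmax_l. assert (G q <= Rmax (G p) (G q)) by apply Rmax_r.
    assert (Rmax (G p) (G q) < be) by (apply Rmax_lub_lt; lra).
    destruct (IVT_seg G p x m Hc ltac:(lra)) as [z1 [Hz1 Hz1']].
    { rewrite Rmin_left, Rmax_right; unfold m; lra. }
    destruct (IVT_seg G x q m Hc ltac:(lra)) as [z2 [Hz2 Hz2']].
    { rewrite Rmin_right, Rmax_left; unfold m; lra. }
    assert (z1 <> x) by (intro; subst; unfold m in *; lra).
    assert (z2 <> x) by (intro; subst; unfold m in *; lra).
    apply (INJ G p q z1 z2 Hd Hnz); lra.
Qed.

Lemma vcomp a b : a <> 0 -> b <> 0 -> / sqrt (Rabs a) <= / sqrt (Rabs b) -> Rabs b <= Rabs a.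
Proof.
  intros Ha Hb H.
  assert (0 < Rabs a) by (apply Rabs_pos_lt; auto). assert (0 < Rabs b) by (apply Rabs_pos_lt; auto).
  assert (0 < sqrt (Rabs a)) by (apply sqrt_lt_R0; auto). assert (0 < sqrt (Rabs b)) by (apply sqrt_lt_R0; auto).
  apply sqrt_le_0; try lra. apply Rnot_lt_le. intro H'.
  assert (/ sqrt (Rabs b) < / sqrt (Rabs a)) by (apply Rinv_lt_contravar; nra). lra.
Qed.


Lemma in_seg ch dh y w z : ch < y < dh -> ch < w < dh -> Rmin y w <= z <= Rmax y w -> ch < z < dh.
Proof. intros H1 H2 H3. unfold Rmin, Rmax in H3. destruct (Rle_dec y w); lra. Qed.

Theorem mainTheorem11 (f : R -> R -> R) (eps : R) :
  MR_family f eps ->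
  exists theta0 : R, theta0 > 0 /\
  forall theta : R, 0 < theta < theta0 ->
  exists t1 : R, t1 > 0 /\
  forall t : R, 0 <= t <= eps -> t <= t1 ->
  forall a0 b0 a1 b1 : R,
    -theta <= a0 -> a0 <= a1 -> a1 < 0 -> 0 < b1 -> b1 <= b0 -> b0 <= theta ->
    f t a0 = f t b0 -> preperiodic (f t) (f t a0) ->
    f t a1 = f t b1 -> preperiodic (f t) (f t a1) ->
    (forall x, (x = a0 \/ x = b0 \/ x = a1 \/ x = b1) ->
       forall k : nat, (k >= 1)%nat -> ~ in_open a0 b0 (iter k (f t) x)) ->
    b1 - a1 <= theta * Rmin (a1 - a0) (b0 - b1) ->
    ((forall k : nat, (k >= 1)%nat -> ~ in_open a0 b0 (iter k (f t) 0)) \/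
     (exists k : nat, (k >= 1)%nat /\ in_open a1 b1 (iter k (f t) 0) /\
        forall j : nat, (1 <= j < k)%nat -> ~ in_open a0 b0 (iter j (f t) 0))) ->
  forall (c d : R) (n : nat),
    is_branch (f t) a1 b1 c d n -> ~ central c d ->
    exists ch dh : R,
      a1 <= ch /\ ch <= c /\ d <= dh /\ dh <= b1 /\
      (forall x, in_open ch dh x -> in_open a0 b0 (iter n (f t) x)) /\
      (forall y, in_open a0 b0 y ->
         exists! x, in_open ch dh x /\ iter n (f t) x = y) /\
      (forall x, in_open ch dh x ->
         ex_derive (iter n (f t)) x /\ Derive (iter n (f t)) x <> 0) /\
      (forall (cc dc : R) (m : nat), is_branch (f t) a1 b1 cc dc m -> central cc dc ->
         dh <= cc \/ dc <= ch) /\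
      (forall x, in_open c d x -> Rabs (Derive (iter n (f t)) x) >= 5).
Proof.
  intros HMR. exists (1/5). split. lra.
  intros theta Hth. exists 1. split. lra.
  intros t Ht _ a0 b0 a1 b1 Ha0 Ha01 Ha1 Hb1 Hb10 Hb0 _ _ _ _ Hbd Hsp Hcase c d n Hbr Hnc.
  destruct HMR as [_ [_ [HSU _]]]. destruct (HSU t Ht) as [HS _].
  set (F := f t) in *.
  assert (HM : 0 < Rmin (a1 - a0) (b0 - b1)).
  { apply Rnot_le_lt. intro H. assert (theta * Rmin (a1 - a0) (b0 - b1) <= 0) by nra. lra. }
  set (M := Rmin (a1 - a0) (b0 - b1)) in *.
  assert (HM1 : M <= a1 - a0) by apply Rmin_l. assert (HM2 : M <= b0 - b1) by apply Rmin_r.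
  assert (HFd : forall x, ex_derive F x) by (apply SU_deriv; auto).
  assert (Hex : forall k x, ex_derive (iter k F) x) by (apply iter_ex; auto).
  assert (Hcont : forall k, continuity (iter k F)) by (intros; apply cont_glob; auto).
  assert (HFI : forall x, inI x -> inI (F x)) by (destruct HS; auto).
  destruct Hbr as [Hc1 [Hcd [Hd1 [Hret Hmax]]]].
  set (w0 := (c + d) / 2).
  assert (Hw0 : c < w0 < d) by (unfold w0; lra).
  destruct (Hret w0 Hw0) as [Hn1 [Hw0n Hw0i]].
  set (g := iter n F) in *.
  assert (Hgw : forall x, c < x < d -> a1 < g x < b1).
  { intros x Hx. destruct (Hret x Hx) as [_ [H _]]. exact H. }
  destruct (left_end g a0 b0 a1 c w0 (Hcont n) Hc1 ltac:(lra)) as [ch [Hch1 [HchT Hchv]]].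
  { intros z Hz. destruct (Hgw z ltac:(lra)). lra. }
  { apply (Hbd a1); auto. }
  destruct (right_end g a0 b0 b1 d w0 (Hcont n) Hd1 ltac:(lra)) as [dh [Hdh1 [HdhT Hdhv]]].
  { intros z Hz. destruct (Hgw z ltac:(lra)). lra. }
  { apply (Hbd b1); auto. }
  assert (HT : forall z, ch < z < dh -> a0 < g z < b0).
  { intros z Hz. destruct (Rle_lt_dec z w0). apply HchT; lra. apply HdhT; lra. }
  assert (HTI : forall z, ch < z < dh -> inI z) by (intros z Hz; unfold inI; lra).
  assert (L1 : forall y, ch < y < dh -> forall i, (1 <= i < n)%nat -> ~ in_open a1 b1 (iter i F y)).
  { intros y Hy i Hi Hin.
    assert (Hw0i' := Hw0i i Hi). unfold in_open in Hin, Hw0i'.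
    assert (Hv : exists v, (v = a1 \/ v = b1) /\
       (Rmin (iter i F y) (iter i F w0) <= v <= Rmax (iter i F y) (iter i F w0))).
    { destruct (Rle_lt_dec (iter i F w0) a1).
      - exists a1. split. auto. unfold Rmin, Rmax. destruct (Rle_dec (iter i F y) (iter i F w0)); lra.
      - exists b1. split. auto. assert (b1 <= iter i F w0) by (apply Rnot_lt_le; intro; apply Hw0i'; lra).
        unfold Rmin, Rmax. destruct (Rle_dec (iter i F y) (iter i F w0)); lra. }
    destruct Hv as [v [Hv1 Hv2]].
    destruct (IVT_gen (iter i F) y w0 v (Hcont i) Hv2) as [z [Hz1 Hz2]].
    assert (Hz := in_seg ch dh y w0 z Hy ltac:(lra) Hz1).
    assert (Hgz := HT z Hz).
    unfold g in Hgz. replace n with ((n - i) + i)%nat in Hgz by lia.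
    rewrite iter_add, Hz2 in Hgz.
    apply (Hbd v ltac:(tauto) (n - i)%nat ltac:(lia)). exact Hgz. }
  assert (PnT : forall y, ch < y < dh -> y <> 0 -> Pn F n y).
  { intros y Hy Hy0 i Hi. split. apply iter_I; auto.
    destruct i. simpl. auto.
    intro H0. apply (L1 y Hy (S i) ltac:(lia)). rewrite H0. unfold in_open. lra. }
  assert (Hnz : forall p q, ch <= p -> q <= dh -> ~ (p < 0 < q) ->
            forall x, p < x < q -> Derive g x <> 0).
  { intros p q Hp Hq H0 x Hx. apply DNZ; auto. apply PnT. lra. intro; subst; lra. }
  assert (Z0 : ~ (ch < 0 < dh)).
  { intro H0. assert (Hg0 := HT 0 H0).
    destruct Hcase as [H1|[k [Hk1 [Hk2 Hk3]]]].
    { apply (H1 n Hn1). exact Hg0. }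
    destruct (Compare_dec.lt_eq_lt_dec k n) as [[Hkn|Hkn]|Hkn].
    { apply (L1 0 H0 k ltac:(lia)). exact Hk2. }
    2:{ apply (Hk3 n ltac:(lia)). exact Hg0. }
    subst k. fold g in Hk2. unfold in_open in Hk2.
    destruct (cont_open g 0 a1 b1 (Hcont n 0) Hk2) as [del [Hdel Hd]].
    unfold central in Hnc.
    destruct (Rlt_le_dec c 0) as [Hc0|Hc0].
    - assert (Hd0 : d <= 0) by (apply Rnot_lt_le; intro; apply Hnc; lra).
      assert (HB : forall x, w0 <= x <= 0 -> a1 < g x < b1).
      { apply (BETW g w0 0 a1 b1 (Hex n)). apply Hnz; lra. lra. apply Hgw; lra. auto. }
      set (d' := Rmin (del / 2) (dh / 2)).
      assert (d' <= del / 2) by apply Rmin_l. assert (d' <= dh / 2) by apply Rmin_r.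
      assert (0 < d') by (apply Rmin_glb_lt; lra).
      assert (c = c /\ d' = d).
      { apply Hmax; try lra.
        intros x Hx. unfold in_open in Hx. split. auto. split.
        - unfold in_open. destruct (Rlt_le_dec x w0). apply Hgw; lra.
          destruct (Rle_lt_dec x 0). apply HB; lra. apply Hd. rewrite Rabs_right; lra.
        - intros j Hj. apply L1; auto. lra. }
      lra.
    - assert (HB : forall x, 0 <= x <= w0 -> a1 < g x < b1).
      { apply (BETW g 0 w0 a1 b1 (Hex n)). apply Hnz; lra. lra. auto. apply Hgw; lra. }
      set (c' := Rmax (- (del / 2)) (ch / 2)).
      assert (- (del / 2) <= c') by apply Rmax_l. assert (ch / 2 <= c') by apply Rmax_r.
      assert (c' < 0) by (apply Rmax_lub_lt; lra).
      assert (c' = c /\ d = d).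
      { apply Hmax; try lra.
        intros x Hx. unfold in_open in Hx. split. auto. split.
        - unfold in_open. destruct (Rlt_le_dec w0 x). apply Hgw; lra.
          destruct (Rle_lt_dec 0 x). apply HB; lra. apply Hd. rewrite Rabs_left; lra.
        - intros j Hj. apply L1; auto. lra. }
      lra. }
  assert (HnzT : forall x, ch < x < dh -> Derive g x <> 0).
  { intros x Hx. apply DNZ; auto. apply PnT; auto. intro; subst; apply Z0; auto. }
  assert (PnT' : forall y, ch < y < dh -> Pn F n y).
  { intros y Hy. apply PnT; auto. intro; subst; apply Z0; auto. }
  assert (Hchdh : ch < dh) by lra.
  assert (Hgne : g ch <> g dh).
  { apply (INJ g ch dh ch dh (Hex n) HnzT); lra. }
  assert (ENDPT : forall e, (g e = a0 \/ g e = b0) ->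
      (forall del, del > 0 -> exists y, Rabs (y - e) < del /\ ch < y < dh) ->
      forall m, ~ return_time F a1 b1 e m).
  { intros e He Hnear m [Hm1 [Hm2 Hm3]].
    destruct (Compare_dec.lt_eq_lt_dec m n) as [[Hmn|Hmn]|Hmn].
    - destruct (cont_open (iter m F) e a1 b1 (Hcont m e) Hm2) as [del [Hdel Hd]].
      destruct (Hnear del Hdel) as [y [Hy1 Hy2]].
      apply (L1 y Hy2 m ltac:(lia)). apply Hd. auto.
    - subst m. fold g in Hm2. unfold in_open in Hm2. destruct He; lra.
    - replace m with ((m - n) + n)%nat in Hm2 by lia. rewrite iter_add in Hm2. fold g in Hm2.
      unfold in_open in Hm2.
      destruct He as [He|He]; rewrite He in Hm2.
      + apply (Hbd a0 ltac:(tauto) (m - n)%nat ltac:(lia)). unfold in_open. lra.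
      + apply (Hbd b0 ltac:(tauto) (m - n)%nat ltac:(lia)). unfold in_open. lra. }
  exists ch, dh.
  split. lra. split. lra. split. lra. split. lra.
  split. { intros x Hx. apply HT. exact Hx. }
  split.
  { intros y Hy. unfold in_open in Hy.
    assert (Hbet : Rmin (g ch) (g dh) <= y <= Rmax (g ch) (g dh)).
    { unfold Rmin, Rmax. destruct (Rle_dec (g ch) (g dh)); destruct Hchv; destruct Hdhv; lra. }
    destruct (IVT_gen g ch dh y (Hcont n) Hbet) as [z [Hz1 Hz2]].
    rewrite Rmin_left, Rmax_right in Hz1 by lra.
    assert (z <> ch) by (intro; subst; destruct Hchv; lra).
    assert (z <> dh) by (intro; subst; destruct Hdhv; lra).
    exists z. split. split. unfold in_open; lra. auto.
    intros x' [Hx' Hgx']. unfold in_open in Hx'.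
    destruct (Rtotal_order x' z) as [Hlt|[Heq|Hgt]]; auto; exfalso.
    - apply (INJ g ch dh x' z (Hex n) HnzT); lra.
    - apply (INJ g ch dh z x' (Hex n) HnzT); lra. }
  split.
  { intros x Hx. split. apply Hex. apply HnzT. exact Hx. }
  split.
  { intros cc dc m Hbrc Hcen. destruct Hbrc as [Hcc1 [Hccd [Hdc1 [Hretc _]]]].
    unfold central in Hcen.
    destruct (Rle_lt_dec 0 ch) as [Hch0|Hch0].
    - right. apply Rnot_lt_le. intro H.
      apply (ENDPT ch Hchv) with (m := m).
      + intros del Hdel. exists (ch + Rmin (del / 2) ((dh - ch) / 2)).
        assert (Rmin (del / 2) ((dh - ch) / 2) <= del / 2) by apply Rmin_l.
        assert (Rmin (del / 2) ((dh - ch) / 2) <= (dh - ch) / 2) by apply Rmin_r.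
        assert (0 < Rmin (del / 2) ((dh - ch) / 2)) by (apply Rmin_glb_lt; lra).
        split. rewrite Rabs_right; lra. lra.
      + apply Hretc. unfold in_open. lra.
    - left. assert (Hdh0 : dh <= 0) by (apply Rnot_lt_le; intro; apply Z0; lra).
      apply Rnot_lt_le. intro H.
      apply (ENDPT dh Hdhv) with (m := m).
      + intros del Hdel. exists (dh - Rmin (del / 2) ((dh - ch) / 2)).
        assert (Rmin (del / 2) ((dh - ch) / 2) <= del / 2) by apply Rmin_l.
        assert (Rmin (del / 2) ((dh - ch) / 2) <= (dh - ch) / 2) by apply Rmin_r.
        assert (0 < Rmin (del / 2) ((dh - ch) / 2)) by (apply Rmin_glb_lt; lra).
        split. rewrite Rabs_left; lra. lra.
      + apply Hretc. unfold in_open. lra. }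
  intros x0 Hx0. unfold in_open in Hx0.
  destruct (CONV F HS n) as [dv [Hdv Hdvm]].
  apply Rnot_lt_ge. intro Hlt. fold g in Hlt.
  assert (Hgd : a1 <= g d <= b1) by (apply (clos_left g c d a1 b1 (Hcont n d) Hcd Hgw)).
  assert (Hgc : a1 <= g c <= b1) by (apply (clos_right g c d a1 b1 (Hcont n c) Hcd Hgw)).
  assert (Hddh : d < dh).
  { destruct (Req_dec d dh). subst. destruct Hdhv; lra. lra. }
  assert (Hchc : ch < c).
  { destruct (Req_dec ch c). subst. destruct Hchv; lra. lra. }
  assert (Hgx0 : Derive g x0 <> 0) by (apply HnzT; lra).
  assert (Hder : forall y, derivable_pt_lim g y (Derive g y)).
  { intros y. apply is_derive_Reals. apply Derive_correct. apply Hex. }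
  assert (Hvd : forall y, ch < y < dh -> derivable_pt_lim (vn F n) y (dv y)).
  { intros y Hy. apply is_derive_Reals. apply Hdv. apply PnT'. auto. }
  assert (Hth5 : 5 * theta < 1) by lra.
  destruct (Rle_lt_dec 0 (dv x0)) as [Hdv0|Hdv0].
  - assert (Hside : forall r, x0 <= r < dh -> Rabs (Derive g r) <= Rabs (Derive g x0)).
    { intros r Hr. destruct (Req_dec r x0) as [->|Hne]. lra.
      destruct (MVT_cor2 (vn F n) dv x0 r ltac:(lra)) as [xi [Hxi1 Hxi2]].
      { intros y Hy. apply Hvd. lra. }
      assert (dv x0 <= dv xi).
      { apply Hdvm. lra. intros y Hy. apply PnT'. lra. }
      apply vcomp. auto. apply HnzT; lra.
      unfold vn in Hxi1. fold g in Hxi1.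
      assert (0 <= dv xi * (r - x0)) by (apply Rmult_le_pos; lra). lra. }
    destruct (MVT_cor2 g (Derive g) d dh Hddh) as [xi [Hxi1 Hxi2]].
    { intros y _. apply Hder. }
    assert (Hs := Hside xi ltac:(lra)).
    assert (Habs : Rabs (g dh - g d) = Rabs (Derive g xi) * (dh - d)).
    { rewrite Hxi1, Rabs_mult, (Rabs_right (dh - d)) by lra. auto. }
    assert (HL : M <= Rabs (g dh - g d)).
    { destruct Hdhv as [E|E]; rewrite E. rewrite Rabs_left1 by lra. lra. rewrite Rabs_right by lra. lra. }
    assert (Rabs (Derive g xi) * (dh - d) <= Rabs (Derive g x0) * (dh - d)) by (apply Rmult_le_compat_r; lra).
    assert (Rabs (Derive g x0) * (dh - d) <= 5 * (dh - d)) by (apply Rmult_le_compat_r; lra).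
    assert (Htm : theta * M < M / 5).
    { replace (M / 5) with ((1/5) * M) by field. apply Rmult_lt_compat_r; lra. }
    lra.
  - assert (Hside : forall r, ch < r <= x0 -> Rabs (Derive g r) <= Rabs (Derive g x0)).
    { intros r Hr. destruct (Req_dec r x0) as [->|Hne]. lra.
      destruct (MVT_cor2 (vn F n) dv r x0 ltac:(lra)) as [xi [Hxi1 Hxi2]].
      { intros y Hy. apply Hvd. lra. }
      assert (dv xi <= dv x0).
      { apply Hdvm. lra. intros y Hy. apply PnT'. lra. }
      apply vcomp. auto. apply HnzT; lra.
      unfold vn in Hxi1. fold g in Hxi1.
      assert (dv xi * (x0 - r) <= 0).
      { assert (0 <= (- dv xi) * (x0 - r)) by (apply Rmult_le_pos; lra). lra. } lra. }
    destruct (MVT_cor2 g (Derive g) ch c Hchc) as [xi [Hxi1 Hxi2]].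
    { intros y _. apply Hder. }
    assert (Hs := Hside xi ltac:(lra)).
    assert (Habs : Rabs (g c - g ch) = Rabs (Derive g xi) * (c - ch)).
    { rewrite Hxi1, Rabs_mult, (Rabs_right (c - ch)) by lra. auto. }
    assert (HL : M <= Rabs (g c - g ch)).
    { destruct Hchv as [E|E]; rewrite E. rewrite Rabs_right by lra. lra. rewrite Rabs_left1 by lra. lra. }
    assert (Rabs (Derive g xi) * (c - ch) <= Rabs (Derive g x0) * (c - ch)) by (apply Rmult_le_compat_r; lra).
    assert (Rabs (Derive g x0) * (c - ch) <= 5 * (c - ch)) by (apply Rmult_le_compat_r; lra).
    assert (Htm : theta * M < M / 5).
    { replace (M / 5) with ((1/5) * M) by field. apply Rmult_lt_compat_r; lra. }
    lra.
Qed.
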